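(* Under the setting and assumptions in the context, let $N_H=E[Y\mid Z=1]-E[Y\mid Z=0]$ and suppose $N_H\ge 0$ and $\max_z\Pr(Y=1\mid Z=z)-\min_z\Pr(Y=1\mid Z=z)>0$. Then $\Pr(H)>0$ and $$\frac{N_H}{1-\max_z\Pr(Y=0,R=1\mid Z=z)-\max_z\Pr(Y=1,R=0\mid Z=z)}\ \le\ APCE_H\ \le\ \frac{N_H}{\max_z\Pr(Y=1\mid Z=z)-\min_z\Pr(Y=1\mid Z=z)},$$ where all maxima and minima are over $z\in\{0,1\}$.
   Context: Units are drawn from a population (a probability space). Each unit has a binary assignment $Z\in\{0,1\}$ with $0<\Pr(Z=1)<1$, binary potential recommendations $R(0),R(1)\in\{0,1\}$, and binary potential outcomes $Y(0),Y(1)\in\{0,1\}$ indexed by the recommendation only (exclusion restriction). Observed quantities are $R=R(Z)$ and $Y=Y(R(Z))$. Assumptions: (Randomization) $Z$ is independent of $(R(0),R(1),Y(0),Y(1))$; (Monotonicity) $Y(1)\ge Y(0)$ almost surely. Helpable stratum $H=\{Y(0)=0,Y(1)=1\}$; $APCE_H=E[R(1)-R(0)\mid H]$. *)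

(* Defs.v *)
From HB Require Import structures.
From mathcomp Require Import all_boot all_order all_algebra.
From mathcomp Require Import all_classical all_reals all_analysis.
Set Implicit Arguments. Unset Strict Implicit. Unset Printing Implicit Defensive.
Import Order.TTheory GRing.Theory Num.Theory.
Local Open Scope classical_set_scope.
Local Open Scope ring_scope.

Section Defs.
Context {d : measure_display} {T : measurableType d} {R : realType}.

Definition pr (P : probability T R) (A : set T) : R := fine (P A).

Definition cpr (P : probability T R) (A B : set T) : R :=
  pr P (A `&` B) / pr P B.

Definition ev (X : T -> bool) (b : bool) : set T := [set t | X t = b].

(* observed recommendation R = R(Z) and observed outcome Y = Y(R(Z)) *)
Definition Robs (Z R0 R1 : T -> bool) : T -> bool :=
  fun t => if Z t then R1 t else R0 t.
Definition Yobs (Z R0 R1 Y0 Y1 : T -> bool) : T -> bool :=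
  fun t => if Robs Z R0 R1 t then Y1 t else Y0 t.

Definition helpable (Y0 Y1 : T -> bool) : set T := ev Y0 false `&` ev Y1 true.

(* independence of Z and the vector V = (R(0),R(1),Y(0),Y(1)) (discrete
   random variables: product rule for all preimage events) *)
Definition indep_Z_V (P : probability T R) (Z : T -> bool)
  (V : T -> bool * bool * bool * bool) : Prop :=
  forall (A : set bool) (B : set (bool * bool * bool * bool)),
    P (Z @^-1` A `&` V @^-1` B) = (P (Z @^-1` A) * P (V @^-1` B))%E.

(* E[Y | Z = z] for binary Y: expectation of the indicator = Pr(Y=1 | Z=z) *)
Definition condE_bin (P : probability T R) (Y : T -> bool) (B : set T) : R :=
  cpr P (ev Y true) B.

(* E[R(1) - R(0) | H] = E[R(1)|H] - E[R(0)|H] *)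
Definition APCE_H (P : probability T R) (R0 R1 Y0 Y1 : T -> bool) : R :=
  condE_bin P R1 (helpable Y0 Y1) - condE_bin P R0 (helpable Y0 Y1).

End Defs.

(* Main.v *)
Require Import Defs.
From HB Require Import structures.
From mathcomp Require Import all_boot all_order all_algebra.
From mathcomp Require Import all_classical all_reals all_analysis.
From mathcomp Require Import lra.
Import Order.TTheory GRing.Theory Num.Theory.
Local Open Scope classical_set_scope.
Local Open Scope ring_scope.

Section Helpers.
Context (d : measure_display) (T : measurableType d) (R : realType)
  (P : probability T R).

Lemma mev (X : T -> bool) b : measurable (ev X true) -> measurable (ev X b).
Proof.
move=> mX; case: b => //.
rewrite (_ : ev X false = ~` ev X true); first exact: measurableC.
apply/seteqP; split=> t; rewrite /ev /=; case: (X t) => //.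
Qed.

Lemma pr_ge0 A : 0 <= pr P A.
Proof. exact/fine_ge0/measure_ge0. Qed.

Lemma split1 (X : T -> bool) S : measurable (ev X true) -> measurable S ->
  pr P S = \sum_(a : bool) pr P (S `&` ev X a).
Proof.
move=> mX mS; rewrite big_bool /=.
have E : S = (S `&` ev X true) `|` (S `&` ev X false).
  apply/seteqP; split=> t /=; rewrite /ev.
    by move=> St; case Xt: (X t); [left|right]; split => //=.
  by case=> [[]|[]].
rewrite {1}E /pr measureU //=; try (by apply: measurableI => //; exact: mev).
  rewrite fineD //; apply: fin_num_measure; by apply: measurableI => //; exact: mev.
apply/seteqP; split=> t //=; rewrite /ev; case=> -[_ Xt] [_]; rewrite /= in Xt *; by rewrite Xt.
Qed.

Lemma mconst (b : bool) : measurable [set t : T | b].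
Proof.
case: b.
  by rewrite (_ : [set t : T | true] = setT) //; apply/seteqP; split.
by rewrite (_ : [set t : T | false] = set0) //; apply/seteqP; split.
Qed.

Lemma shannon (X : T -> bool) (g : bool -> T -> bool) :
  measurable (ev X true) -> (forall b, measurable [set t | g b t]) ->
  measurable [set t | g (X t) t].
Proof.
move=> mX mg.
rewrite (_ : [set t | g (X t) t] = (ev X true `&` [set t | g true t]) `|`
   (ev X false `&` [set t | g false t])).
  by apply: measurableU; apply: measurableI => //; exact: mev.
apply/seteqP; split=> t /=; rewrite /ev /=.
  by case Xt: (X t) => H; [left|right].
by case=> -[->].
Qed.

Section Atoms.
Context (Z R0 R1 Y0 Y1 : T -> bool)
  (m0 : measurable (ev R0 true)) (m1 : measurable (ev R1 true))
  (m2 : measurable (ev Y0 true)) (m3 : measurable (ev Y1 true)).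

Definition hs (h : bool -> bool -> bool -> bool -> bool) : set T :=
  [set t | h (R0 t) (R1 t) (Y0 t) (Y1 t)].

Lemma mhs h : measurable (hs h).
Proof.
apply: (@shannon _ (fun a t => h a (R1 t) (Y0 t) (Y1 t))) => // a.
apply: (@shannon _ (fun b t => h a b (Y0 t) (Y1 t))) => // b.
apply: (@shannon _ (fun c t => h a b c (Y1 t))) => // c.
apply: (@shannon _ (fun e t => h a b c e)) => // e.
exact: mconst.
Qed.

Definition w a b c e :=
  pr P (hs (fun a' b' c' e' => [&& a' == a, b' == b, c' == c & e' == e])).

Lemma piece h a b c e :
  pr P (hs h `&` ev R0 a `&` ev R1 b `&` ev Y0 c `&` ev Y1 e) =
  if h a b c e then w a b c e else 0.
Proof.
case H: (h a b c e).
  rewrite /w; congr pr; apply/seteqP; split => t /=; rewrite /ev /hs /=.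
    by move=> [[[[Ht ->] ->] ->] ->]; rewrite !eqxx.
  move=> /and4P [/eqP e0 /eqP e1 /eqP e2 /eqP e3].
  by rewrite e0 e1 e2 e3 H.
rewrite (_ : _ `&` _ = set0); first by rewrite /pr measure0.
apply/seteqP; split => t //=; rewrite /ev /hs /=.
by move=> [[[[Ht e0] e1] e2] e3]; rewrite e0 e1 e2 e3 H in Ht.
Qed.

Lemma pr_exp h : pr P (hs h) =
  \sum_(a : bool) \sum_(b : bool) \sum_(c : bool) \sum_(e : bool)
     (if h a b c e then w a b c e else 0).
Proof.
rewrite (split1 _ _ m0 (mhs h)); apply: eq_bigr => a _.
rewrite (split1 _ _ m1); last by apply: measurableI; [exact: mhs|exact: mev].
apply: eq_bigr => b _.
rewrite (split1 _ _ m2); last by do 2 (apply: measurableI; last exact: mev); exact: mhs.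
apply: eq_bigr => c _.
rewrite (split1 _ _ m3); last by do 3 (apply: measurableI; last exact: mev); exact: mhs.
apply: eq_bigr => e _.
exact: piece.
Qed.

End Atoms.

Lemma condZ (Z R0 R1 Y0 Y1 : T -> bool) z (A : set T) h :
  measurable (ev Z true) ->
  measurable (ev R0 true) -> measurable (ev R1 true) ->
  measurable (ev Y0 true) -> measurable (ev Y1 true) ->
  indep_Z_V P Z (fun t => (R0 t, R1 t, Y0 t, Y1 t)) ->
  0 < pr P (ev Z z) ->
  A `&` ev Z z = ev Z z `&` hs R0 R1 Y0 Y1 h ->
  cpr P A (ev Z z) = pr P (hs R0 R1 Y0 Y1 h).
Proof.
move=> mZ m0 m1 m2 m3 ind pz E.
rewrite /cpr E /pr.
have := ind [set z] [set v | h v.1.1.1 v.1.1.2 v.1.2 v.2].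
have -> : Z @^-1` [set z] = ev Z z by [].
have -> : (fun t => (R0 t, R1 t, Y0 t, Y1 t)) @^-1`
   [set v | h v.1.1.1 v.1.1.2 v.1.2 v.2] = hs R0 R1 Y0 Y1 h by [].
move=> ->.
rewrite /pr fineM; first last.
- by apply: fin_num_measure; exact: mhs.
- by apply: fin_num_measure; exact: mev.
rewrite mulrAC divff ?mul1r //; exact: lt0r_neq0.
Qed.

End Helpers.
Arguments hs {d T}.
Arguments w {d T R} P.
Arguments pr_ge0 {d T R P}.

Ltac seteq0 y ro z r0 r1 y0 y1 := apply/seteqP; split; let t := fresh "t" in intro t;
  try unfold y; try unfold ro;
  try rewrite /helpable; try rewrite /hs; try rewrite /ev; try rewrite /Yobs; try rewrite /Robs; rewrite /=;
  case: (z t); case: (r0 t); case: (r1 t); case: (y0 t); case: (y1 t);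
  rewrite /=; intuition (try discriminate; try reflexivity).

Theorem mainTheorem6 (d : measure_display) (T : measurableType d)
  (R : realType) (P : probability T R) (Z R0 R1 Y0 Y1 : T -> bool) :
  (* the variables are random variables (events {X = true} measurable) *)
  measurable (ev Z true) -> measurable (ev R0 true) ->
  measurable (ev R1 true) -> measurable (ev Y0 true) ->
  measurable (ev Y1 true) ->
  (* 0 < Pr(Z = 1) < 1 *)
  0 < pr P (ev Z true) < 1 ->
  (* randomization *)
  indep_Z_V P Z (fun t => (R0 t, R1 t, Y0 t, Y1 t)) ->
  (* monotonicity: Y(1) >= Y(0) almost surely *)
  P [set t | Y0 t = true /\ Y1 t = false] = 0%E ->
  let Y := Yobs Z R0 R1 Y0 Y1 in
  let Ro := Robs Z R0 R1 in
  let NH := condE_bin P Y (ev Z true) - condE_bin P Y (ev Z false) in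
  let p1 := fun z => cpr P (ev Y true) (ev Z z) in
  let q01 := fun z => cpr P (ev Y false `&` ev Ro true) (ev Z z) in
  let q10 := fun z => cpr P (ev Y true `&` ev Ro false) (ev Z z) in
  0 <= NH ->
  0 < Num.max (p1 true) (p1 false) - Num.min (p1 true) (p1 false) ->
  0 < pr P (helpable Y0 Y1) /\
  NH / (1 - Num.max (q01 true) (q01 false) - Num.max (q10 true) (q10 false))
    <= APCE_H P R0 R1 Y0 Y1 /\
  APCE_H P R0 R1 Y0 Y1
    <= NH / (Num.max (p1 true) (p1 false) - Num.min (p1 true) (p1 false)).
Proof.
move=> mZ m0 m1 m2 m3 /andP[pz0 pz1] ind mono Y Ro NH p1 q01 q10 NH0 gap.
have pset1 : pr P setT = 1 by rewrite /pr probability_setT.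
have pzf : pr P (ev Z false) = 1 - pr P (ev Z true).
  rewrite -pset1 (@split1 _ _ _ P _ _ mZ measurableT) big_bool /= !setTI; lra.
have pzf0 : 0 < pr P (ev Z false) by rewrite pzf; lra.
have cZ z A h := @condZ _ _ _ P Z R0 R1 Y0 Y1 z A h mZ m0 m1 m2 m3 ind.
have Ep1t : p1 true = pr P (hs R0 R1 Y0 Y1 (fun a b c e => if b then e else c)).
  by apply: cZ => //; seteq0 Y Ro Z R0 R1 Y0 Y1.
have Ep1f : p1 false = pr P (hs R0 R1 Y0 Y1 (fun a b c e => if a then e else c)).
  by apply: cZ => //; seteq0 Y Ro Z R0 R1 Y0 Y1.
have Eq01t : q01 true = pr P (hs R0 R1 Y0 Y1 (fun a b c e => ~~ (if b then e else c) && b)).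
  by apply: cZ => //; seteq0 Y Ro Z R0 R1 Y0 Y1.
have Eq01f : q01 false = pr P (hs R0 R1 Y0 Y1 (fun a b c e => ~~ (if a then e else c) && a)).
  by apply: cZ => //; seteq0 Y Ro Z R0 R1 Y0 Y1.
have Eq10t : q10 true = pr P (hs R0 R1 Y0 Y1 (fun a b c e => (if b then e else c) && ~~ b)).
  by apply: cZ => //; seteq0 Y Ro Z R0 R1 Y0 Y1.
have Eq10f : q10 false = pr P (hs R0 R1 Y0 Y1 (fun a b c e => (if a then e else c) && ~~ a)).
  by apply: cZ => //; seteq0 Y Ro Z R0 R1 Y0 Y1.
have EH : helpable Y0 Y1 = hs R0 R1 Y0 Y1 (fun a b c e => ~~ c && e) by seteq0 Y Ro Z R0 R1 Y0 Y1.
have EH1 : ev R1 true `&` helpable Y0 Y1 = hs R0 R1 Y0 Y1 (fun a b c e => b && ~~ c && e) by seteq0 Y Ro Z R0 R1 Y0 Y1.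
have EH0 : ev R0 true `&` helpable Y0 Y1 = hs R0 R1 Y0 Y1 (fun a b c e => a && ~~ c && e) by seteq0 Y Ro Z R0 R1 Y0 Y1.
have EAPCE : APCE_H P R0 R1 Y0 Y1 =
   pr P (hs R0 R1 Y0 Y1 (fun a b c e => b && ~~ c && e)) / pr P (helpable Y0 Y1) -
   pr P (hs R0 R1 Y0 Y1 (fun a b c e => a && ~~ c && e)) / pr P (helpable Y0 Y1).
  by rewrite /APCE_H /condE_bin /cpr EH1 EH0.
have Etot : pr P (hs R0 R1 Y0 Y1 (fun a b c e => true)) = 1.
  by rewrite -pset1; congr pr; seteq0 Y Ro Z R0 R1 Y0 Y1.
have Ebad : pr P (hs R0 R1 Y0 Y1 (fun a b c e => c && ~~ e)) = 0.
  rewrite (_ : hs _ _ _ _ _ = [set t | Y0 t = true /\ Y1 t = false]); last by seteq0 Y Ro Z R0 R1 Y0 Y1.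
  by rewrite /pr mono.
have Ep1tNH : NH = p1 true - p1 false by [].
have hpH1 := erefl (pr P (hs R0 R1 Y0 Y1 (fun a b c e => b && ~~ c && e))).
have hpH0 := erefl (pr P (hs R0 R1 Y0 Y1 (fun a b c e => a && ~~ c && e))).
rewrite {2}pr_exp // !big_bool /= in hpH1.
rewrite {2}pr_exp // !big_bool /= in hpH0.
have EpH : pr P (helpable Y0 Y1) = pr P (hs R0 R1 Y0 Y1 (fun a b c e => ~~ c && e)) by rewrite EH.
have W a b c e : 0 <= w P R0 R1 Y0 Y1 a b c e by exact: pr_ge0.
move: Ep1t Ep1f Eq01t Eq01f Eq10t Eq10f Etot Ebad EpH.
rewrite !pr_exp // !big_bool /=.
have := W true true true true.
have := W true true true false.
have := W true true false true.
have := W true true false false.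
have := W true false true true.
have := W true false true false.
have := W true false false true.
have := W true false false false.
have := W false true true true.
have := W false true true false.
have := W false true false true.
have := W false true false false.
have := W false false true true.
have := W false false true false.
have := W false false false true.
have := W false false false false.
move=> *.
rewrite EAPCE.
have hle : p1 false <= p1 true by lra.
rewrite (max_idPl hle) (min_idPr hle) in gap *.
have pHpos : 0 < pr P (helpable Y0 Y1) by lra.
have hD : pr P (helpable Y0 Y1) <= 1 - Num.max (q01 true) (q01 false) - Num.max (q10 true) (q10 false).
  have h1 : Num.max (q01 true) (q01 false) <= w P R0 R1 Y0 Y1 true true false false + w P R0 R1 Y0 Y1 true false false false + w P R0 R1 Y0 Y1 false true false false + w P R0 R1 Y0 Y1 false false false false.
    by rewrite ge_max; apply/andP; split; lra.
  have h2 : Num.max (q10 true) (q10 false) <= w P R0 R1 Y0 Y1 true true true true + w P R0 R1 Y0 Y1 true false true true + w P R0 R1 Y0 Y1 false true true true + w P R0 R1 Y0 Y1 false false true true.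
    by rewrite ge_max; apply/andP; split; lra.
  lra.
have hNH : pr P (hs R0 R1 Y0 Y1 (fun a b c e => b && ~~ c && e)) -
  pr P (hs R0 R1 Y0 Y1 (fun a b c e => a && ~~ c && e)) = NH by lra.
split; first exact: pHpos.
have EA : pr P (hs R0 R1 Y0 Y1 (fun a b c e => b && ~~ c && e)) / pr P (helpable Y0 Y1) -
  pr P (hs R0 R1 Y0 Y1 (fun a b c e => a && ~~ c && e)) / pr P (helpable Y0 Y1) = NH / pr P (helpable Y0 Y1).
  by rewrite -mulrBl hNH.
rewrite EA -Ep1tNH; split.
  apply: ler_wpM2l => //; rewrite lef_pV2 ?posrE //; lra.
rewrite divff; last by apply: lt0r_neq0; lra.
rewrite ler_pdivrMr //; lra.
Qed.
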